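(* If $G$ is a 3-symmetric graph on $n\ge 3$ vertices, then $n\equiv 0,1,$ or $8 \pmod{16}$. In particular no 3-symmetric graph has $n$ vertices for $3\le n\le 7$.
   Context: All graphs are finite and simple. For a graph $G$ on $n$ vertices and a graph $H$ on $k$ vertices, the density $t(H,G)$ is the number of $k$-element subsets $S\subseteq V(G)$ whose induced subgraph $G[S]$ is isomorphic to $H$, divided by $\binom{n}{k}$. A graph $G$ with $n\ge 3$ vertices is 3-symmetric if $t(K_3,G)=1/8$, $t(P_3,G)=3/8$, $t(K_2\cup K_1,G)=3/8$ and $t(\overline{K_3},G)=1/8$, where $K_3$ is the triangle, $P_3$ is the path with 3 vertices and 2 edges, $K_2\cup K_1$ is the 3-vertex graph with exactly one edge, and $\overline{K_3}$ is the 3-vertex graph with no edges. *)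

(* Defs.v *)
From mathcomp Require Import all_boot all_order all_algebra.
Set Implicit Arguments. Unset Strict Implicit. Unset Printing Implicit Defensive.
Import GRing.Theory Num.Theory.

Definition simple_graph (n : nat) (e : rel 'I_n) : Prop :=
  (forall x, ~~ e x x) /\ (forall x y, e x y = e y x).

Definition induced_iso (n k : nat) (e : rel 'I_n) (h : rel 'I_k)
  (S : {set 'I_n}) : bool :=
  [exists f : {ffun 'I_k -> 'I_n},
     [&& injectiveb f, f @: setT == S & [forall i, forall j, e (f i) (f j) == h i j]]].

Definition density (n k : nat) (h : rel 'I_k) (e : rel 'I_n) : rat :=
  (#|[set S : {set 'I_n} | (#|S| == k) && induced_iso e h S]|)%:R / ('C(n, k))%:R.

Definition K3 : rel 'I_3 := fun i j => i != j.
Definition P3 : rel 'I_3 := fun i j =>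
  ((val i == 0%N) && (val j == 1%N)) || ((val i == 1%N) && (val j == 0%N)) ||
  ((val i == 1%N) && (val j == 2%N)) || ((val i == 2%N) && (val j == 1%N)).
Definition K2K1 : rel 'I_3 := fun i j =>
  ((val i == 0%N) && (val j == 1%N)) || ((val i == 1%N) && (val j == 0%N)).
Definition coK3 : rel 'I_3 := fun _ _ => false.

Definition three_symmetric (n : nat) (e : rel 'I_n) : Prop :=
  [/\ density K3 e = 1 / 8, density P3 e = 3 / 8,
      density K2K1 e = 3 / 8 & density coK3 e = 1 / 8]%R.

(* Main.v *)
Require Import Defs.
From mathcomp Require Import all_boot all_order all_algebra.
From mathcomp Require Import zify.
Set Implicit Arguments. Unset Strict Implicit. Unset Printing Implicit Defensive.
Import GRing.Theory Num.Theory.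

Definition hc (h: rel 'I_3) := #|[set p : 'I_3*'I_3 | h p.1 p.2]|.
Lemma card_pairs (h : rel 'I_3) : hc h = \sum_(i < 3) \sum_(j < 3) (h i j : nat).
Proof.
rewrite /hc -sum1_card big_mkcond pair_big /=; apply: eq_bigr => p _.
by rewrite inE; case: (h _ _).
Qed.
Lemma hc_vals : [/\ hc K3 = 6, hc P3 = 4, hc K2K1 = 2 & hc coK3 = 0].
Proof. by split; rewrite card_pairs !big_ord_recr !big_ord0 /=. Qed.

Definition oec n (e : rel 'I_n) (S : {set 'I_n}) :=
  #|[set p : 'I_n * 'I_n | [&& p.1 \in S, p.2 \in S & e p.1 p.2]]|.

Lemma oec_iso n (e : rel 'I_n) h S : induced_iso e h S -> oec e S = hc h.
Proof.
case/existsP=> f /and3P[/injectiveP finj /eqP fS /forallP fe].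
have fe' : forall i j, e (f i) (f j) = h i j by move=> i j; exact: (eqP (forallP (fe i) j)).
rewrite /oec /hc -(card_imset _ (f := fun p => (f p.1, f p.2))); last first.
  by move=> [i j] [i' j'] /= [/finj -> /finj ->].
apply: eq_card; case=> x y; rewrite !inE /=.
apply/idP/imsetP.
- case/and3P => xS yS exy; rewrite -fS in xS yS.
  case/imsetP: xS => i _ Ex; case/imsetP: yS => j _ Ey; subst x y.
  by exists (i, j) => //; rewrite inE /= -fe'.
- case=> [[i j]]; rewrite inE /= => hij [-> ->].
  by rewrite -fS !imset_f ?inE // fe' hij.
Qed.

Lemma arith_mod q r : ((q*16+r+2)*(q*16+r+1)*(q*16+r)) %% 16 = ((r+2)*(r+1)*r) %% 16.
Proof.
have -> : (q*16+r+2)*(q*16+r+1)*(q*16+r) =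
  (q*q*q*256 + q*q*16*(3*r+3) + q*(3*r*r + 6*r + 2))*16 + (r+2)*(r+1)*r by nia.
by rewrite modnMDl.
Qed.

Lemma arith_mod2 q r : ((q*16+r+2)*(q*16+r+1)) %% 4 = ((r+2)*(r+1)) %% 4.
Proof.
have -> : (q*16+r+2)*(q*16+r+1) = (q*q*64 + q*(8*r+12))*4 + (r+2)*(r+1) by nia.
by rewrite modnMDl.
Qed.

Lemma arith n : (3 <= n)%N -> (16 %| n*(n-1)*(n-2))%N -> (4 %| n*(n-1))%N ->
  n %% 16 \in [:: 0; 1; 8].
Proof.
case: n => [|[|n]] // _.
have -> : n.+2 - 1 = n.+1 by lia.
have -> : n.+2 - 2 = n by lia.
rewrite (divn_eq n 16).
move: (@ltn_pmod n 16 isT); set r := n %% 16; set q := n %/ 16 => lt16.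
have E1 : (q * 16 + r).+2 = q*16+r+2 by rewrite !addnS addn0.
have E2 : (q * 16 + r).+1 = q*16+r+1 by rewrite addn1.
rewrite E1 E2 /dvdn arith_mod arith_mod2 -addnA modnMDl; clear E1 E2; clearbody r q; clear q.
by do 16! (case: r lt16 => [|r] lt16 //).
Qed.
Definition T3 n := [set S : {set 'I_n} | #|S| == 3].
Definition Acl n (e : rel 'I_n) (h : rel 'I_3) :=
  [set S : {set 'I_n} | (#|S| == 3) && induced_iso e h S].

Lemma dens n (e : rel 'I_n) h c : (3 <= n) ->
  density h e = (c%:R / 8%:R)%R -> 8 * #|Acl e h| = c * 'C(n, 3).
Proof.
move=> n3 /eqP; rewrite /density GRing.eqr_div ?pnatr_eq0 -?lt0n ?bin_gt0 //.
rewrite -!natrM eqr_nat => /eqP H; rewrite mulnC; exact: H.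
Qed.

Lemma count2 n (x y : 'I_n) : x != y ->
  #|[set S : {set 'I_n} | [&& #|S| == 3, x \in S & y \in S]]| = n - 2.
Proof.
move=> xy.
have -> : [set S : {set 'I_n} | [&& #|S| == 3, x \in S & y \in S]] =
    (fun z => [set x; y; z]) @: (~: [set x; y]).
  apply/setP => S; rewrite inE; apply/idP/imsetP.
  - case/and3P=> /eqP c3 xS yS.
    have sub : [set x; y] \subset S by apply/subsetP => z; rewrite !inE => /orP[] /eqP ->.
    have : #|S :\: [set x; y]| == 1.
      by rewrite cardsD (setIidPr sub) c3 cards2 xy.
    case/cards1P => z Hz.
    have zin : z \in S :\: [set x; y] by rewrite Hz set11.
    exists z; first by move: zin; rewrite !inE => /andP[].
    apply/setP => w; rewrite !inE.
    apply/idP/idP.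
    + move=> wS; case: (boolP (w \in [set x; y])); first by rewrite !inE => /orP[] /eqP ->; rewrite eqxx ?orbT.
      move=> wn; have : w \in S :\: [set x; y] by rewrite inE wn.
      by rewrite Hz inE => ->; rewrite !orbT.
    + case/orP; first by case/orP => /eqP ->.
      by move/eqP->; move: zin; rewrite inE => /andP[].
  - case=> z; rewrite !inE negb_or => /andP[zx zy] ->.
    rewrite !inE !eqxx /= orbT andbT.
    rewrite setUC (setUC [set x]) !cardsU1 cards1 !inE (negbTE zy) (negbTE zx) /=.
    by rewrite (eq_sym y) xy.
rewrite card_in_imset.
  by rewrite cardsCs setCK cards2 xy card_ord; lia.
move=> z1 z2; rewrite !inE !negb_or => /andP[z1x z1y] _ Heq.
have : z1 \in [set x; y; z2] by rewrite -Heq !inE eqxx !orbT.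
by rewrite !inE (negbTE z1x) (negbTE z1y) => /eqP.
Qed.

Lemma dbl n (e : rel 'I_n) : (forall x, ~~ e x x) ->
  \sum_(S in T3 n) oec e S = #|[set p : 'I_n * 'I_n | e p.1 p.2]| * (n - 2).
Proof.
move=> irr.
have H : forall S, oec e S = \sum_(p : 'I_n * 'I_n) ([&& p.1 \in S, p.2 \in S & e p.1 p.2] : nat).
  move=> S; rewrite /oec -sum1_card big_mkcond /=; apply: eq_bigr => p _.
  by rewrite inE; case: (_ && _).
under eq_bigr do rewrite H.
have -> : #|[set p : 'I_n * 'I_n | e p.1 p.2]| = \sum_(p : 'I_n * 'I_n) (e p.1 p.2 : nat).
  rewrite -sum1_card big_mkcond /=; apply: eq_bigr => p _.
  by rewrite inE; case: (e _ _).
rewrite exchange_big /= big_distrl /=.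
apply: eq_bigr => p _.
case: (boolP (e p.1 p.2)) => epp; last first.
  by rewrite big1 // => S _; rewrite !andbF.
have pn : p.1 != p.2.
  by apply/eqP => E; move: (irr p.1); rewrite {2}E epp.
rewrite /= mul1n -(count2 pn) -sum1_card big_mkcond /= [RHS]big_mkcond /=.
by apply: eq_bigr => S _; rewrite !inE andbT; case: (#|S| == 3).
Qed.

Lemma disjA n (e : rel 'I_n) h h' : hc h != hc h' -> Acl e h :&: Acl e h' = set0.
Proof.
move=> hne; apply/setP => S; rewrite !inE; apply/negbTE/negP.
case/andP => /andP[_ i1] /andP[_ i2].
by move: hne; rewrite -(oec_iso i1) -(oec_iso i2) eqxx.
Qed.

Lemma sumA n (e : rel 'I_n) h : \sum_(S in Acl e h) oec e S = #|Acl e h| * hc h.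
Proof.
rewrite -sum_nat_const; apply: eq_bigr => S; rewrite inE => /andP[_ i].
exact: oec_iso.
Qed.

Lemma part n (e : rel 'I_n) : (3 <= n) -> three_symmetric e ->
  \sum_(S in T3 n) oec e S = 3 * 'C(n, 3).
Proof.
move=> n3 [d3 d2 d1 d0].
have a3 := dens (c:=1) n3 d3; have a2 := dens (c:=3) n3 d2; have a1 := dens (c:=3) n3 d1; have a0 := dens (c:=1) n3 d0.
case: hc_vals => h3 h2 h1 h0.
set A3 := Acl e K3; set A2 := Acl e P3; set A1 := Acl e K2K1; set A0 := Acl e coK3.
fold A3 in a3; fold A2 in a2; fold A1 in a1; fold A0 in a0.
have D32 : A3 :&: A2 = set0 by apply: disjA; rewrite h3 h2.
have D31 : A3 :&: A1 = set0 by apply: disjA; rewrite h3 h1.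
have D30 : A3 :&: A0 = set0 by apply: disjA; rewrite h3 h0.
have D21 : A2 :&: A1 = set0 by apply: disjA; rewrite h2 h1.
have D20 : A2 :&: A0 = set0 by apply: disjA; rewrite h2 h0.
have D10 : A1 :&: A0 = set0 by apply: disjA; rewrite h1 h0.
have E1 : [disjoint A3 & A2] by rewrite -setI_eq0 D32.
have E2 : [disjoint A3 :|: A2 & A1] by rewrite -setI_eq0 setIUl D31 D21 setU0.
have E3 : [disjoint A3 :|: A2 :|: A1 & A0] by rewrite -setI_eq0 !setIUl D30 D20 D10 !setU0.
have cU : #|A3 :|: A2 :|: A1 :|: A0| = #|A3| + #|A2| + #|A1| + #|A0|.
  rewrite !cardsU !setIUl D30 D20 D10 D31 D21 D32 !setU0 !cards0 !subn0.
  by [].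
have cT : #|T3 n| = 'C(n, 3) by rewrite /T3 card_draws card_ord.
have UT : A3 :|: A2 :|: A1 :|: A0 = T3 n.
  apply/eqP; rewrite eqEcard; apply/andP; split.
    by apply/subsetP => S; rewrite !inE => /orP[/orP[/orP[]|]|] /andP[].
  rewrite cU cT; lia.
rewrite -UT.
rewrite (eq_bigl [predU (A3 :|: A2 :|: A1) & A0]); last by move=> S; rewrite in_setU.
rewrite bigU //.
rewrite (eq_bigl [predU (A3 :|: A2) & A1]); last by move=> S; rewrite in_setU.
rewrite bigU //.
rewrite (eq_bigl [predU A3 & A2]); last by move=> S; rewrite in_setU.
rewrite bigU // !sumA h3 h2 h1 h0 /= -/A3 -/A2 -/A1 -/A0; clearbody A3 A2 A1 A0. move: #|A3| #|A2| #|A1| #|A0| 'C(n, 3) a3 a2 a1 a0 => x3 x2 x1 x0 C a3 a2 a1 a0. clear -a3 a2 a1 a0. lia.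
Qed.

Lemma evenE n (e : rel 'I_n) : simple_graph e -> 2 %| #|[set p : 'I_n * 'I_n | e p.1 p.2]|.
Proof.
case=> irr sym.
set A := [set p : 'I_n * 'I_n | e p.1 p.2].
set L := [set p : 'I_n * 'I_n | p.1 < p.2].
have sw : A :\: L = (fun p : 'I_n * 'I_n => (p.2, p.1)) @: (A :&: L).
  apply/setP => -[x y]; rewrite !inE /=; apply/idP/imsetP.
  - case/andP => nxy exy; exists (y, x); last by [].
    rewrite !inE /= sym exy /=.
    rewrite ltn_neqAle; move: nxy; rewrite -leqNgt => ->; rewrite andbT.
    by apply/eqP => E; move: (irr x); rewrite -{2}(val_inj E) exy.
  - case=> -[a b]; rewrite !inE /= => /andP[eab ab] [-> ->].
    by rewrite sym eab -leqNgt ltnW.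
have inj : injective (fun p : 'I_n * 'I_n => (p.2, p.1)) by move=> [a b] [c d] [-> ->].
rewrite -(cardsID L A) sw card_imset //.
by rewrite addnn dvdn2 odd_double.
Qed.

Theorem mainTheorem6 (n : nat) (e : rel 'I_n) :
  (3 <= n)%N -> simple_graph e -> three_symmetric e ->
  (n %% 16 \in [:: 0; 1; 8])%N /\ ~ (3 <= n <= 7)%N.
Proof.
move=> n3 sg ts.
have P := part n3 ts.
have [irr _] := sg.
rewrite dbl // in P.
move: (evenE sg) => /dvdnP [m Hm]; rewrite Hm in P.
have a3 := dens (c:=1) n3 (let: And4 d _ _ _ := ts in d).
have C6 : 'C(n, 3) * 6 = n * (n - 1) * (n - 2).
  case: n n3 {e sg ts P Hm a3 irr} => [|[|[|k]]] // _.
  rewrite -[6]/(3`!) bin_ffact !ffactnS /= ffactn0.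
  rewrite !subSS !subn0; lia.
have H1 : (n - 2) * (n * (n - 1)) = (n - 2) * (m * 4) by nia.
have H2 : n * (n - 1) = m * 4.
  by apply/eqP; rewrite -(eqn_pmul2l (_ : 0 < n - 2)) ?H1 //; lia.
have M : n %% 16 \in [:: 0; 1; 8].
  apply: arith => //.
  - apply/dvdnP; exists (3 * #|Acl e K3|); nia.
  - by apply/dvdnP; exists m.
split => // /andP [_ n7].
move: M; rewrite modn_small; last by lia.
by rewrite !inE; move: n3 n7; case: n {e sg ts P Hm a3 C6 H1 H2 irr} => [|[|[|[|[|[|[|[|[|]]]]]]]]].
Qed.
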